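(* Let $n\ge 2$. For $k\ge 1$ let $E_k$ be the $k\times k$ identity matrix (and $E_0$ the empty matrix). Define integer matrices $X_m$ of size $\frac{m(m-1)}{2}\times m$ for $m\ge 2$ inductively by $X_2=\begin{pmatrix}1&-1\end{pmatrix}$ and, for $m>2$, $X_m=\begin{pmatrix}\mathbf{1}& -E_{m-1}\\ \mathbf{0} & X_{m-1}\end{pmatrix}$, where $\mathbf{1}$ is the all-ones column vector of length $m-1$ and $\mathbf{0}$ is the zero column vector of length $\frac{(m-1)(m-2)}{2}$. Let \[ A_n=\begin{pmatrix}-E_n & -{}^tX_n\\ -X_n & -nE_{n(n-1)/2}\end{pmatrix}, \] a square integer matrix of size $n+\frac{n(n-1)}{2}$. Then the Smith normal form of $A_n$ over $\mathbb{Z}$ is \[ E_{2n-2}\oplus nE_{(n-2)(n-3)/2}\oplus O, \] where $O$ is the zero matrix (necessarily square of size $n-1$).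
   Context: ${}^tM$ denotes the transpose of $M$, and $D_1\oplus D_2\oplus D_3$ denotes the block-diagonal matrix with diagonal blocks $D_1,D_2,D_3$. (The matrix $A_n$ is the weighted incidence matrix of the plumbing graph obtained from the complete graph on $n$ vertices by giving each original vertex weight $-1$, inserting a vertex of weight $-n$ on each edge, with the two resulting half-edges signed $-$ and $+$.) *)

(* Defs.v *)
From mathcomp Require Import all_boot all_order all_algebra.
Set Implicit Arguments. Unset Strict Implicit. Unset Printing Implicit Defensive.
Import Order.TTheory GRing.Theory Num.Theory.

Fixpoint tri (m : nat) : nat := if m is m'.+1 then (m' + tri m')%N else 0%N.

Lemma triE m : tri m = (m * (m - 1)) %/ 2.
Proof.
elim: m => // m IH /=; rewrite IH.
case: m {IH} => [|m] //.
rewrite !subn1 /=.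
have -> : (m.+2 * m.+1 = m.+1 * m + m.+1 * 2)%N by rewrite -mulnDr addn2 mulnC.
by rewrite divnDr ?dvdn_mull // mulnK // addnC.
Qed.

Local Open Scope ring_scope.

(* X_m : integer matrix of size tri m x m.  X 0, X 1 are empty placeholders;
   for m >= 2 the recursion is the paper's
   X_(m) = [ 1 | -E_(m-1) ; 0 | X_(m-1) ], and it yields X_2 = (1 -1). *)
Fixpoint Xmx (m : nat) : 'M[int]_(tri m, m) :=
  match m return 'M[int]_(tri m, m) with
  | 0 => 0
  | p.+1 =>
    match p return 'M[int]_(tri p, p) -> 'M[int]_(tri p.+1, p.+1) with
    | 0 => fun _ => 0
    | m'.+1 => fun X =>
      row_mx (col_mx (const_mx 1 : 'M[int]_(m'.+1, 1))
                     (0 : 'M[int]_(tri m'.+1, 1)))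
             (col_mx (- (1%:M : 'M[int]_(m'.+1))) X)
    end (Xmx p)
  end.

Definition Amx (n : nat) : 'M[int]_(n + tri n) :=
  block_mx (- (1%:M : 'M[int]_n)) (- (Xmx n)^T)
           (- Xmx n) (- (n%:R *: (1%:M : 'M[int]_(tri n)))).

Definition diagseq (m n : nat) (d : seq int) : 'M[int]_(m, n) :=
  \matrix_(i, j) (d`_i *+ (i == j :> nat)).

Definition is_Smith_normal_form (m n : nat) (A D : 'M[int]_(m, n)) : Prop :=
  exists d : seq int,
    [/\ sorted (fun a b => (a %| b)%Z) d, all (fun a => 0 <= a) d,
        size d = minn m n,
        D = diagseq m n d &
        exists2 L : 'M[int]_m, L \in unitmx &
        exists2 R : 'M[int]_n, R \in unitmx & L *m A *m R = D].

(* Main.v *)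
Require Import Defs.
From mathcomp Require Import all_boot all_order all_algebra all_fingroup zify ring.
Set Implicit Arguments. Unset Strict Implicit. Unset Printing Implicit Defensive.
Import Order.TTheory GRing.Theory Num.Theory.
Local Open Scope ring_scope.

Definition eqv p q (A B : 'M[int]_(p, q)) :=
  exists2 L : 'M[int]_p, L \in unitmx & exists2 R : 'M[int]_q, R \in unitmx & L *m A *m R = B.

Lemma eqv_refl p q (A : 'M[int]_(p,q)) : eqv A A.
Proof. by exists 1%:M; rewrite ?unitmx1 //; exists 1%:M; rewrite ?unitmx1 // mul1mx mulmx1. Qed.

Lemma eqv_trans p q (A B C : 'M[int]_(p,q)) : eqv A B -> eqv B C -> eqv A C.
Proof.
move=> [L1 uL1 [R1 uR1 e1]] [L2 uL2 [R2 uR2 e2]].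
exists (L2 *m L1); first by rewrite unitmx_mul uL1 uL2.
exists (R1 *m R2); first by rewrite unitmx_mul uR1 uR2.
by rewrite -e2 -e1 !mulmxA.
Qed.

Lemma eqv_mul p q (A : 'M[int]_(p,q)) L R : L \in unitmx -> R \in unitmx -> eqv A (L *m A *m R).
Proof. by move=> uL uR; exists L => //; exists R. Qed.

Lemma eqv_diag p q r s (P : 'M[int]_(p,q)) (A B : 'M[int]_(r,s)) :
  eqv A B -> eqv (block_mx P 0 0 A) (block_mx P 0 0 B).
Proof.
move=> [L uL [R uR e]].
exists (block_mx 1%:M 0 0 L).
  by rewrite unitmxE det_ublock det1 mul1r -unitmxE.
exists (block_mx 1%:M 0 0 R).
  by rewrite unitmxE det_ublock det1 mul1r -unitmxE.
by rewrite !mulmx_block !(mulmx0, mul0mx, mul1mx, mulmx1, addr0, add0r) e.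
Qed.

Lemma XmxS k : Xmx k.+2 = row_mx (col_mx (const_mx 1 : 'M[int]_(k.+1, 1))
                     (0 : 'M[int]_(tri k.+1, 1)))
             (col_mx (- (1%:M : 'M[int]_(k.+1))) (Xmx k.+1)).
Proof. by []. Qed.

Lemma const_mul a b c : (const_mx 1 : 'M[int]_(a, b)) *m (const_mx 1 : 'M[int]_(b, c)) = b%:R *: const_mx 1.
Proof.
apply/matrixP => i j; rewrite !mxE.
under eq_bigr do rewrite !mxE mulr1.
by rewrite sumr_const card_ord mulr1.
Qed.

Lemma Xmx_const m p : Xmx m *m (const_mx 1 : 'M[int]_(m, p)) = 0.
Proof.
elim: m p => [|m IH] p; first by rewrite flatmx0.
case: m IH => [|k] IH; first by rewrite /= mul0mx.
change (@mulmx _ (tri k.+2) (1 + k.+1) p (Xmx k.+2) (const_mx 1) = 0).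
rewrite XmxS -(col_mx_const 1 k.+1 p (1:int)) mul_row_col !mul_col_mx IH.
rewrite !mul0mx mulNmx mul1mx const_mul scale1r.
by rewrite add_col_mx addr0 subrr col_mx0.
Qed.

Lemma XtX m : (Xmx m)^T *m Xmx m = m%:R%:M - const_mx 1.
Proof.
elim: m => [|m IH]; first by rewrite thinmx0 flatmx0.
case: m IH => [|k] IH.
  rewrite /= mulmx0; apply/matrixP => i j; rewrite !mxE !ord1 /=; by [].
change (@mulmx _ (1 + k.+1) (k.+1 + tri k.+1) (1 + k.+1) (@trmx _ (k.+1 + tri k.+1) (1 + k.+1) (Xmx k.+2)) (Xmx k.+2) = (k.+2)%:R%:M - (const_mx 1 : 'M_(1 + k.+1))).
rewrite XmxS tr_row_mx !tr_col_mx mul_col_row !mul_row_col IH.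
rewrite !trmx0 !mul0mx !mulmx0 !addr0 trmx_const const_mul.
rewrite mulmxN [(- _)^T]raddfN /= trmx1 mulmxN mulNmx !mul1mx mulmx1 ?mulNmx ?mulmx1 ?opprK.
rewrite (scalar_mx_block 1 k.+1) -(block_mx_const 1 k.+1 1 k.+1 (1:int)).
rewrite opp_block_mx add_block_mx !sub0r.
congr block_mx; apply/matrixP => i j; rewrite !mxE ?ord1 /= ?mulr1.
- rewrite mulr1n; lia.
- case: (i == j) => /=; rewrite ?mulr1n ?mulr0n; lia.
Qed.

Definition Dp k : 'M[int]_(k + tri k, 1 + k) :=
  row_mx (0 : 'M_(k + tri k, 1)) (col_mx (1%:M : 'M_k) (0 : 'M_(tri k, k))).

Lemma unit_neg1 p : (- 1%:M : 'M[int]_p) \in unitmx.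
Proof. by rewrite unitmxE -scaleN1r detZ det1 mulr1 unitrX ?unitrN1. Qed.

Lemma X_eqv k : @eqv (k + tri k) (1 + k) (Xmx k.+1) (Dp k).
Proof.
case: k => [|k].
  by rewrite [Xmx 1]flatmx0 [Dp 0]flatmx0; apply: eqv_refl.
exists (block_mx (- 1%:M : 'M_(k.+1)) 0 (Xmx k.+1) 1%:M).
  by rewrite unitmxE det_lblock det1 mulr1 -unitmxE unit_neg1.
exists (block_mx (1%:M : 'M_1) 0 (const_mx 1 : 'M_(k.+1,1)) 1%:M).
  by rewrite unitmxE det_lblock !det1 mulr1 unitr1.
rewrite -mulmxA XmxS mul_row_block.
rewrite !mulmx1 !mulmx0 add0r [col_mx (- _) _ *m _]mul_col_mx Xmx_const mulNmx mul1mx add_col_mx addr0 subrr col_mx0.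
rewrite mul_mx_row mul_block_col mulmx0 mul0mx addr0 !mulmxN !mulmx1 opprK mul1mx addNr.
by [].
Qed.

Lemma unit_ltri p q (B : 'M[int]_(q, p)) : block_mx (1%:M : 'M_p) 0 B (1%:M : 'M_q) \in unitmx.
Proof. by rewrite unitmxE det_lblock !det1 mulr1 unitr1. Qed.
Lemma unit_utri p q (B : 'M[int]_(p, q)) : block_mx (1%:M : 'M_p) B 0 (1%:M : 'M_q) \in unitmx.
Proof. by rewrite unitmxE det_ublock !det1 mulr1 unitr1. Qed.

Lemma step1 n t (X : 'M[int]_(t, n)) (c : int) :
  eqv (block_mx (- 1%:M : 'M_n) (- X^T) (- X) (- (c *: 1%:M)))
      (block_mx (- 1%:M) 0 0 (X *m X^T - c *: 1%:M)).
Proof.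
exists (block_mx 1%:M 0 (- X) 1%:M); first exact: unit_ltri.
exists (block_mx 1%:M (- X^T) 0 1%:M); first exact: unit_utri.
rewrite !mulmx_block !(mulmx0, mul0mx, mul1mx, mulmx1, addr0, add0r).
rewrite !mulNmx !mulmxN !mulmx1 !opprK mul1mx !subrr mul0mx oppr0 add0r.
by [].
Qed.

Lemma trN p q (A : 'M[int]_(p,q)) : (- A)^T = - A^T.
Proof. by apply/matrixP => i j; rewrite !mxE. Qed.

Lemma const_Xt m p : (const_mx 1 : 'M[int]_(p, m)) *m (Xmx m)^T = 0.
Proof. by rewrite -(trmx_const m p (1:int)) -trmx_mul Xmx_const trmx0. Qed.

Lemma XnXnT k :
  (Xmx k.+2 *m (Xmx k.+2)^T : 'M_(k.+1 + tri k.+1)) =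
  block_mx (const_mx 1 + 1%:M) (- (Xmx k.+1)^T) (- Xmx k.+1) (Xmx k.+1 *m (Xmx k.+1)^T).
Proof.
change (@mulmx _ (k.+1 + tri k.+1) (1 + k.+1) (k.+1 + tri k.+1) (Xmx k.+2) (@trmx _ (k.+1 + tri k.+1) (1 + k.+1) (Xmx k.+2)) = 
  block_mx (const_mx 1 + 1%:M) (- (Xmx k.+1)^T) (- Xmx k.+1) (Xmx k.+1 *m (Xmx k.+1)^T)).
rewrite XmxS tr_row_mx !tr_col_mx mul_row_col !mul_col_row.
rewrite !trmx0 !mul0mx !mulmx0 trmx_const const_mul scale1r trN trmx1.
rewrite !mulNmx !mulmxN !mul1mx !mulmx1 opprK -[const_mx 1 in RHS]addr0 -[- Xmx k.+1 in RHS]add0r.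
by rewrite -[- (Xmx k.+1)^T in RHS]add0r -[Xmx k.+1 *m _ in RHS]add0r -add_block_mx addr0.
Qed.

Lemma step2 k : @eqv (k.+1 + tri k.+1) (k.+1 + tri k.+1)
  (Xmx k.+2 *m (Xmx k.+2)^T - (k.+2)%:R *: 1%:M)
  (block_mx 0 0 (- Xmx k.+1) (- ((k.+2)%:R *: 1%:M))).
Proof.
exists (block_mx 1%:M (- (Xmx k.+1)^T) 0 1%:M); first exact: unit_utri.
exists (block_mx 1%:M (Xmx k.+1)^T 0 1%:M); first exact: unit_utri.
rewrite XnXnT !scalemx1 (scalar_mx_block k.+1 (tri k.+1)) opp_block_mx add_block_mx.
rewrite !mulmx_block !(mulmx0, mul0mx, mul1mx, mulmx1, addr0, add0r).
have H1 : const_mx 1 + 1%:M - (k.+2%:R)%:M + - (Xmx k.+1)^T *m (- Xmx k.+1 - 0) = 0 :> 'M[int]_(k.+1).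
  rewrite subr0 mulNmx mulmxN opprK XtX.
  apply/matrixP => i j; rewrite !mxE; case: (i == j) => /=; rewrite ?mulr1n ?mulr0n; lia.
congr block_mx => //.
- rewrite H1 mul0mx add0r subr0 mulNmx mulmxBr mulmxA XtX mulmxBl const_Xt subr0.
  rewrite mul_mx_scalar mul_scalar_mx.
  apply/matrixP => i j; rewrite !mxE.
  have -> : (k.+2)%:R = (k.+1)%:R + 1 :> int by lia.
  ring.
- by rewrite subr0.
- by rewrite subr0 mulNmx addKr.
Qed.

Lemma step3 r q (A B : 'M[int]_(q, r)) (c : int) : eqv A B ->
  eqv (block_mx (0 : 'M_(r,r)) (0 : 'M_(r,q)) (- A) (- (c *: 1%:M) : 'M_q))
      (block_mx 0 0 (- B) (- (c *: 1%:M))).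
Proof.
move=> [L uL [R uR e]].
exists (block_mx 1%:M 0 0 L).
  by rewrite unitmxE det_ublock det1 mul1r -unitmxE.
exists (block_mx R 0 0 (invmx L)).
  by rewrite unitmxE det_ublock unitrM -!unitmxE unitmx_inv uL uR.
rewrite !mulmx_block !(mulmx0, mul0mx, mul1mx, mulmx1, addr0, add0r).
rewrite mulmxN mulNmx e mulmxN mulNmx scalemx1 scalar_mxC -mulmxA mulmxV //.
by rewrite mulmx1.
Qed.

Lemma DpDpT k : Dp k *m (Dp k)^T = block_mx 1%:M 0 0 0.
Proof.
rewrite /Dp tr_row_mx tr_col_mx !trmx0 trmx1 mul_row_col mul0mx add0r mul_col_row.
by rewrite !mul1mx !mul0mx ?mulmx0.
Qed.

Lemma step4 k (c : int) :
  eqv (block_mx (0 : 'M_(1 + k, 1 + k)) (0 : 'M_(1 + k, k + tri k)) (- Dp k) (- (c *: 1%:M)))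
      (block_mx 0 0 (- Dp k) (block_mx 0 0 0 (- (c *: 1%:M) : 'M_(tri k)))).
Proof.
exists 1%:M; first exact: unitmx1.
exists (block_mx 1%:M (- (c *: (Dp k)^T)) 0 1%:M); first exact: unit_utri.
rewrite mul1mx !mulmx_block !(mulmx0, mul0mx, mul1mx, mulmx1, addr0, add0r).
rewrite mulmxN mulNmx opprK -scalemxAr DpDpT !scalemx1 (scalar_mx_block k (tri k)).
rewrite scale_block_mx opp_block_mx add_block_mx.
by rewrite scalemx1 subrr !scaler0 !subr0 add0r.
Qed.

Definition Hf k (c : int) : 'M[int]_((1 + k) + (k + tri k)) :=
  block_mx (0 : 'M_(1 + k, 1 + k)) 0 (- Dp k) (block_mx 0 0 0 (- (c *: 1%:M) : 'M_(tri k))).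

Lemma chain k : eqv (Amx k.+2) (block_mx (- 1%:M : 'M_(k.+2)) 0 0 (Hf k (k.+2)%:R)).
Proof.
apply: eqv_trans (step1 _ _) _.
apply: eqv_diag.
apply: eqv_trans (step2 k) _.
apply: eqv_trans (step3 _ (X_eqv k)) _.
exact: step4.
Qed.

Definition gnat k (i j : nat) : nat :=
  (if (i < k.+2) && (j == i) then 1
  else if (k.+2 + k.+1 <= i) && (i < k.+2 + k.+1 + k) && (j + k == i) then 1
  else if (k.+2 + k.+1 + k <= i) && (j == i) then k.+2 else 0)%N.

Definition Gm k := block_mx (- 1%:M : 'M_(k.+2)) 0 0 (Hf k (k.+2)%:R).

Ltac ordnat := repeat match goal with
 | H : ~ (@eq ?T ?a ?b) |- _ => match type of a with ordinal _ => have : (nat_of_ord a <> nat_of_ord b) by (move=> /ord_inj; exact: H) end; clear H; move=> ?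
 | H : ~ (@eq ?T ?a ?b) |- _ => assert_fails (constr_eq T nat); change (~ (@eq nat a b)) in H
 | H : @eq ?T ?a ?b |- _ => match type of a with ordinal _ => have : (nat_of_ord a = nat_of_ord b) by (rewrite H) end; clear H; move=> ?
 | H : @eq ?T ?a ?b |- _ => assert_fails (constr_eq T nat); change (@eq nat a b) in H
 end.

Ltac addb := repeat match goal with x : ordinal ?n |- _ => lazymatch goal with _ : is_true (nat_of_ord x < n)%N |- _ => fail | _ => have := ltn_ord x; move=> ? end end.

Lemma Gm_entry k i j : Gm k i j = - (gnat k i j)%:R.
Proof.
rewrite /Gm /Hf /Dp /gnat.
rewrite !mxE.
do 8 (try (case: splitP => ? ?; rewrite ?mxE /=)).
all: repeat (case: ifP => ?); repeat (case: eqP => ?); rewrite /= ?mulr1n ?mulr0n ?mul1r ?mulr1 ?mulr0 ?oppr0; try lia.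
all: ordnat; addb; lia.
Qed.

Lemma eqv_natperm N (G : 'M[int]_N) (f h : nat -> nat) (d : seq int) (gv : nat -> nat -> int) :
  (forall i j : 'I_N, G i j = gv i j) ->
  (forall i, (i < N)%N -> (f i < N)%N) -> (forall i, (i < N)%N -> (h i < N)%N) ->
  (forall i j, (i < N)%N -> (j < N)%N -> f i = f j -> i = j) ->
  (forall i j, (i < N)%N -> (j < N)%N -> h i = h j -> i = j) ->
  (forall i j, (i < N)%N -> (j < N)%N -> gv (f i) (h j) = - (d`_i *+ (i == j)%N)) ->
  eqv G (diagseq N N d).
Proof.
move=> eG fN hN fI hI eD.
pose F (i : 'I_N) : 'I_N := Ordinal (fN i (ltn_ord i)).
pose H (i : 'I_N) : 'I_N := Ordinal (hN i (ltn_ord i)).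
have Fi : injective F.
  by move=> a b /(congr1 val) /= /fI => E; apply: val_inj; apply: E.
have Hi : injective H.
  by move=> a b /(congr1 val) /= /hI => E; apply: val_inj; apply: E.
exists (- 1%:M *m perm_mx (perm Fi)).
  by rewrite unitmx_mul unit_neg1 unitmx_perm.
exists (perm_mx (perm Hi)^-1%g); first exact: unitmx_perm.
have -> : ((perm Hi)^-1 = ((perm Hi)^-1)^-1^-1)%g by rewrite invgK.
rewrite -col_permE -mulmxA -row_permE mulNmx mul1mx.
apply/matrixP => i j; rewrite !mxE ?invgK !permE eG /= eD ?opprK //.
Qed.

Definition fnat k i : nat := (if i < k.+2 then i else if i < k.+2 + k + tri k then i + k.+1 else i - (k + tri k))%N.
Definition hnat k i : nat := (if i < k.+2 then i else if i < k.+2 + k then i.+1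
  else if i < k.+2 + k + tri k then i + k.+1 else if i == k.+2 + k + tri k then k.+2 else i - tri k)%N.

Lemma final_eqv k :
  eqv (Amx k.+2) (diagseq (k.+2 + tri k.+2) (k.+2 + tri k.+2)
       (nseq (2 * k.+2 - 2) 1 ++ nseq (tri (k.+2 - 2)) (k.+2%:Z) ++ nseq (k.+2 - 1) 0)).
Proof.
apply: eqv_trans (chain k) _.
have tE : tri k.+2 = (k.+1 + (k + tri k))%N by [].
have e2 : (k.+2 - 2 = k)%N by lia.
apply: (@eqv_natperm _ (Gm k) (fnat k) (hnat k) _ (fun i j => - (gnat k i j)%:R)).
- exact: Gm_entry.
- rewrite ?tE => i Hi; rewrite /fnat; repeat case: ifP => ?; lia.
- rewrite ?tE => i Hi; rewrite /hnat; repeat case: ifP => ?; lia.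
- rewrite ?tE => i j Hi Hj; rewrite /fnat; repeat case: ifP => ?; lia.
- rewrite ?tE => i j Hi Hj; rewrite /hnat; repeat case: ifP => ?; lia.
rewrite ?tE e2 => i j Hi Hj.
rewrite nth_cat !size_nseq nth_cat !size_nseq !nth_nseq.
rewrite /fnat /hnat.
repeat case: ifP => ?; rewrite /gnat; repeat case: ifP => ?; case: eqP => ?; rewrite /= ?mulr1n ?mulr0n ?oppr0 ?mul0rn ?mul1rn; try lia.

Qed.

Lemma sorted_cons (x : int) s : all (fun y => (x %| y)%Z) s -> sorted (fun a b => (a %| b)%Z) s ->
  sorted (fun a b => (a %| b)%Z) (x :: s).
Proof. by move=> a b; rewrite /= path_min_sorted. Qed.

Lemma sorted_d a b c (x : int) : sorted (fun a b => (a %| b)%Z) (nseq a 1 ++ nseq b x ++ nseq c 0).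
Proof.
elim: a => [|a IH] /=.
  elim: b => [|b IH] /=.
    elim: c => [|c IH] //=.
    apply: sorted_cons => //; by rewrite all_nseq orbT.
  apply: sorted_cons => //; by rewrite all_cat !all_nseq dvdzz dvdz0 !orbT.
apply: sorted_cons => //; by rewrite !all_cat !all_nseq !dvd1z !orbT.
Qed.

Theorem theorem4p4 (n : nat) (hn : (2 <= n)%N) :
  is_Smith_normal_form (Amx n)
    (diagseq (n + tri n) (n + tri n)
       (nseq (2 * n - 2) 1 ++ nseq (tri (n - 2)) (n%:Z) ++ nseq (n - 1) 0)).
Proof.
case: n hn => [|[|k]] // _.
have [L uL [R uR e]] := final_eqv k.
exists (nseq (2 * k.+2 - 2) 1 ++ nseq (tri (k.+2 - 2)) (k.+2%:Z) ++ nseq (k.+2 - 1) 0).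
split => //.
- exact: sorted_d.
- by rewrite !all_cat !all_nseq !orbT.
- rewrite !size_cat !size_nseq minnn.
  have -> : (k.+2 - 2 = k)%N by lia.
  have -> : tri k.+2 = (k.+1 + (k + tri k))%N by [].
  lia.
- by exists L => //; exists R.
Qed.
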